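(* Let $m\ge 2$ be an integer, let $\lambda_1,\dots,\lambda_m>0$, and let $X_1,\dots,X_m$ be independent random variables with $X_i\sim\mathrm{Pois}(\lambda_i)$. For $n\ge1$ define $p_n^{(m)}=\mathbb{P}(X_1\cdots X_m\ge n)$. Then, as $n\to\infty$, \[ p_n^{(m)}=(2\pi)^{(m-1)/2}\,n^{(m-1)/(2m)}\exp\bigl(-n^{1/m}\log n+O(n^{1/m})\bigr), \] and in particular $\log p_n^{(m)}=-n^{1/m}\log n+O(n^{1/m})$.
   Context: $\log$ denotes the natural logarithm. $\mathrm{Pois}(\lambda)$ is the Poisson distribution with mean $\lambda$. *)

(* Defs.v *)
From HB Require Import structures.
From mathcomp Require Import all_boot all_order all_algebra.
From mathcomp Require Import all_classical all_reals all_analysis.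
Set Implicit Arguments. Unset Strict Implicit. Unset Printing Implicit Defensive.
Import Order.TTheory GRing.Theory Num.Theory.
Local Open Scope classical_set_scope.
Local Open Scope ring_scope.

(* Mutual independence of a finite family of real random variables:
   for every family of Borel sets B_i, the joint probability factors.
   (Sub-families are covered by taking B_i = setT.) *)
Definition mutually_independent {d : measure_display} {T : measurableType d}
  {R : realType} (P : probability T R) (m : nat) (X : 'I_m -> {RV P >-> R}) :=
  forall B : 'I_m -> set R, (forall i, measurable (B i)) ->
    P (\bigcap_(i in [set: 'I_m]) (X i @^-1` B i)) =
    (\prod_(i < m) P (X i @^-1` B i))%E.

Definition poisson_distributed_RV {d : measure_display} {T : measurableType d}
  {R : realType} (P : probability T R) (lam : R) (X : {RV P >-> R}) :=
  forall k : nat, P (X @^-1` [set k%:R]) = (poisson_pmf lam k)%:E.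

Definition prod_tail {d : measure_display} {T : measurableType d}
  {R : realType} (P : probability T R) (m : nat) (X : 'I_m -> {RV P >-> R})
  (n : nat) : R :=
  fine (P [set w | n%:R <= \prod_(i < m) X i w]).

Arguments mutually_independent {d T R} P {m} X.
Arguments poisson_distributed_RV {d T R} P lam X.
Arguments prod_tail {d T R} P {m} X n.

(* Main.v *)
Require Import Defs.
From HB Require Import structures.
From mathcomp Require Import all_boot all_order all_algebra.
From mathcomp Require Import all_classical all_reals all_analysis.
From mathcomp Require Import ring lra zify.
From Stdlib Require Import Lia.
Import Order.TTheory GRing.Theory Num.Theory.
Local Open Scope classical_set_scope.
Local Open Scope ring_scope.

Section RealLemmas.
Variable R : realType.

Lemma pow_le_fact_exp (t : nat) : (t%:R:R)^+t <= t`!%:R * expR t%:R.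
Proof.
case: t => [|k]; first by rewrite expr0 fact0 mul1r expR0.
have h := @expR_ge1Dxn R k.+1%:R k (ler0n _ _).
have f0 : (0:R) < k.+1`!%:R by rewrite ltr0n fact_gt0.
rewrite mulrC -ler_pdivrMr //.
apply: le_trans h; rewrite lerDr //.
Qed.

Lemma fact_le_pow (t : nat) : (t`! <= t ^ t)%N.
Proof.
elim: t => [//|k ih].
rewrite factS expnS leq_mul2l /=.
apply: leq_trans ih _; case: k => [//|k]; by rewrite leq_exp2r.
Qed.

Lemma fact_mul_le (i J : nat) : (i`! * J`! <= (i + J)`!)%N.
Proof.
elim: i => [|i ih]; first by rewrite fact0 mul1n add0n.
rewrite factS addSn factS -mulnA leq_mul //.
by rewrite ltnS leq_addr.
Qed.

End RealLemmas.
Section Cheb.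
Variable R : realType.

Lemma chebyshev_ln (m : nat) (t : 'I_m -> R) : (forall i, 0 < t i) ->
  (\sum_i t i) * (\sum_i ln (t i)) <= m%:R * \sum_i (t i * ln (t i)).
Proof.
move=> tp.
have H : 0 <= \sum_i \sum_j (t i - t j) * (ln (t i) - ln (t j)).
  apply: sumr_ge0 => i _; apply: sumr_ge0 => j _.
  have [hij|hij] := lerP (t i) (t j).
    have hl : ln (t i) <= ln (t j) by rewrite ler_ln // posrE.
    by rewrite mulr_le0 // subr_le0.
  have hl : ln (t j) <= ln (t i) by rewrite ler_ln ?posrE // ltW.
  by rewrite mulr_ge0 // subr_ge0 // ltW.
have E : \sum_i \sum_j (t i - t j) * (ln (t i) - ln (t j)) =
   (m%:R * \sum_i (t i * ln (t i)) - (\sum_i t i) * (\sum_i ln (t i))) *+ 2.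
  have e1 : forall i j, (t i - t j) * (ln (t i) - ln (t j)) =
     (t i * ln (t i) + t j * ln (t j)) - (t i * ln (t j) + t j * ln (t i)).
    move=> i j; ring.
  under eq_bigr do under eq_bigr do rewrite e1.
  under eq_bigr do rewrite sumrB !big_split /=.
  rewrite sumrB !big_split /=.
  have c0 : \sum_(i < m) \sum_(j < m) t j * ln (t j) = m%:R * \sum_i (t i * ln (t i)).
    rewrite exchange_big /=.
    by rewrite mulr_sumr; apply: eq_bigr => j _; rewrite sumr_const card_ord mulr_natl.
  rewrite c0.
  have c1 : \sum_(i < m) \sum_(j < m) t i * ln (t i) = m%:R * \sum_i (t i * ln (t i)).
    by rewrite mulr_sumr; apply: eq_bigr => j _; rewrite sumr_const card_ord mulr_natl.
  have c2 : \sum_(i < m) \sum_(j < m) t i * ln (t j) = (\sum_i t i) * (\sum_i ln (t i)).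
    by rewrite mulr_suml; apply: eq_bigr => i _; rewrite mulr_sumr.
  rewrite c1 c2.
  have c3 : \sum_(i < m) \sum_(j < m) t j * ln (t i) = (\sum_i t i) * (\sum_i ln (t i)).
    rewrite exchange_big /=. exact: c2.
  rewrite c3; rewrite mulr2n; ring.
move: H; rewrite E pmulrn_lge0 // subr_ge0 //.
Qed.
End Cheb.
Section C.
Variable R : realType.
Lemma rootK (m n : nat) : (0 < m)%N -> ((n%:R : R) `^ (m%:R^-1)) ^+ m = n%:R.
Proof.
move=> m0.
rewrite -powR_mulrn ?powR_ge0 // -powRrM mulVf ?pnatr_eq0 -?lt0n // powRr1 //.
Qed.

Lemma ln_root (m n : nat) : ln ((n%:R : R) `^ (m%:R^-1)) = ln n%:R / m%:R.
Proof. by rewrite ln_powR mulrC. Qed.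

Lemma ln_prod (m : nat) (t : 'I_m -> R) : (forall i, 0 < t i) ->
  ln (\prod_i t i) = \sum_i ln (t i).
Proof.
move=> tp.
have : expR (\sum_i ln (t i)) = \prod_i t i.
  rewrite expR_sum; apply: eq_bigr => i _; rewrite lnK // posrE //.
by move=> <-; rewrite expRK.
Qed.

Lemma amgm_root (m n : nat) (t : 'I_m -> nat) : (0 < m)%N ->
  (n <= \prod_i t i)%N ->
  (n%:R : R) `^ (m%:R^-1) <= (\sum_i (t i)%:R) / m%:R.
Proof.
move=> m0 hn.
have h := @leif_AGM R 'I_m predT (fun i => (t i)%:R).
rewrite /= card_ord in h.
have h2 := (h (fun i _ => ler0n _ _)).1.
rewrite leNgt; apply/negP => hlt.
have : ((\sum_i (t i)%:R) / m%:R) ^+ m < ((n%:R : R) `^ (m%:R^-1)) ^+ m.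
  rewrite ltrXn2r // ?lt0n_neq0 //.
  by rewrite divr_ge0 // sumr_ge0.
rewrite rootK // => h3.
have : (n%:R : R) <= \prod_i (t i)%:R by rewrite -natr_prod ler_nat.
move=> h4.
have := lt_le_trans (le_lt_trans h4 (le_lt_trans h2 h3)) (lexx _).
by rewrite ltxx.
Qed.
End C.
Section D.
Variable R : realType.
Lemma pmf_term_bound (lam L : R) (t : nat) : 0 < lam -> lam <= expR L -> (0 < t)%N ->
  lam ^+ t / t`!%:R <= expR (t%:R * (1 + L) - t%:R * ln (t%:R : R)).
Proof.
move=> l0 lL t0.
have tp : (0 : R) < t%:R by rewrite ltr0n.
have f0 : (0 : R) < t`!%:R by rewrite ltr0n fact_gt0.
have h1 : lam ^+ t <= expR (t%:R * L).
  rewrite expRM_natl; apply: lerXn2r => //; rewrite ?nnegrE ?ltW //.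
  exact: expR_gt0.
have h2 : t`!%:R^-1 <= expR t%:R / (t%:R ^+ t : R).
  have tt0 : (0:R) < t%:R ^+ t by rewrite exprn_gt0.
  rewrite ler_pdivlMr // mulrC ler_pdivrMr // mulrC.
  exact: pow_le_fact_exp.
have e : expR (t%:R * (1 + L) - t%:R * ln (t%:R : R)) = expR (t%:R * L) * (expR t%:R / (t%:R ^+ t)).
  rewrite -[X in _ / X]lnK ?posrE ?exprn_gt0 // lnXn // -expRB -expRD.
  congr expR; rewrite -mulr_natl; ring.
rewrite e; apply: ler_pM => //.
  by rewrite exprn_ge0 // ltW.
Qed.
End D.
Section E.
Variable R : realType.

Lemma final_ineq (K S Ln a M c l : R) : 0 < M -> 0 <= K -> K * Ln <= M * S -> l <= Ln ->
  a <= K / M -> M * c <= l -> K * c - S <= M * c * a - a * l.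
Proof.
move=> M0 K0 h1 h2 h3 h4.
have hS : K * l / M <= S.
  rewrite ler_pdivrMr // [S * M]mulrC; exact: le_trans (ler_wpM2l K0 h2) h1.
have : K * c - S <= (K / M) * (M * c - l).
  have -> : (K / M) * (M * c - l) = K * c - K * l / M.
    by field; rewrite gt_eqF.
  by rewrite lerD2l lerN2.
move=> h; apply: le_trans h _.
have -> : M * c * a - a * l = a * (M * c - l) by ring.
apply: ler_wnM2r => //; by rewrite subr_le0.
Qed.

Lemma tuple_bound (m : nat) (lam : 'I_m -> R) (L : R) (t : 'I_m -> nat) (n : nat) :
  (0 < m)%N -> (forall i, 0 < lam i) -> (forall i, lam i <= expR L) ->
  (0 < n)%N -> (n <= \prod_i t i)%N -> m%:R * (1 + L) <= ln (n%:R : R) ->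
  \prod_i ((lam i) ^+ (t i) / (t i)`!%:R) <=
    expR (m%:R * (1 + L) * ((n%:R : R) `^ (m%:R^-1)) - ((n%:R : R) `^ (m%:R^-1)) * ln (n%:R : R)).
Proof.
move=> m0 lp lL n0 hn hbig.
have tp : forall i, (0 < t i)%N.
  by move=> i; apply: (@gt0_prodn _ xpredT t (leq_trans n0 hn) i).
have tpR : forall i, (0 : R) < (t i)%:R by move=> i; rewrite ltr0n.
apply: (@le_trans _ _ (\prod_i expR ((t i)%:R * (1 + L) - (t i)%:R * ln ((t i)%:R : R)))).
  apply: ler_prod => i _; apply/andP; split.
    by rewrite divr_ge0 // exprn_ge0 // ltW.
  exact: pmf_term_bound.
rewrite -expR_sum ler_expR sumrB -mulr_suml.
apply: (@final_ineq _ _ (\sum_i ln ((t i)%:R : R))).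
- by rewrite ltr0n.
- by rewrite sumr_ge0 // => i _; rewrite ltW.
- exact: chebyshev_ln.
- rewrite -ln_prod // -natr_prod ler_ln ?posrE ?ltr0n ?ler_nat //.
  exact: leq_trans hn.
- exact: amgm_root.
- exact: hbig.
Qed.
End E.
Section F.
Variable R : realType.
Local Open Scope ereal_scope.
Lemma pois_series (lam : R) : (0 < lam)%R ->
  \sum_(k <oo) (poisson_pmf lam k)%:E = 1.
Proof.
move=> l0.
rewrite nneseries_esumT; last by move=> k; rewrite lee_fin poisson_pmf_ge0.
have h : poisson_prob lam 0%N [set: nat] = 1 by exact: probability_setT.
by rewrite /poisson_prob l0 in h.
Qed.

Lemma pmf_shift (lam : R) (i J : nat) : (0 < lam)%R ->
  (poisson_pmf lam (i + J) <= lam ^+ J / J`!%:R * poisson_pmf lam i)%R.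
Proof.
move=> l0; rewrite /poisson_pmf l0.
have e0 := expR_ge0 (- lam).
rewrite mulrA; apply: ler_wpM2r => //.
have fi : (i`!%:R : R) != 0%R by rewrite pnatr_eq0 -lt0n fact_gt0.
have fJ : (J`!%:R : R) != 0%R by rewrite pnatr_eq0 -lt0n fact_gt0.
have -> : (lam ^+ J / J`!%:R * (lam ^+ i * i`!%:R^-1) =
   (lam ^+ (i + J)) * ((i`! * J`!)%:R)^-1)%R.
  by rewrite exprD natrM; field; rewrite fi fJ.
apply: ler_wpM2l; first by rewrite exprn_ge0 // ltW.
rewrite lef_pV2 ?posrE ?ltr0n ?muln_gt0 ?fact_gt0 //.
by rewrite ler_nat fact_mul_le.
Qed.

Lemma pois_tail (lam : R) (J : nat) : (0 < lam)%R ->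
  (1 - \sum_(j < J) poisson_pmf lam j <= lam ^+ J / J`!%:R)%R.
Proof.
move=> l0.
have f0 : forall k, 0 <= (poisson_pmf lam k)%:E by move=> k; rewrite lee_fin poisson_pmf_ge0.
have T := @pois_series lam l0.
rewrite (nneseries_split 0 J) // add0n -nneseries_addn // in T.
have c0 : (0 <= lam ^+ J / J`!%:R)%R by rewrite divr_ge0 // exprn_ge0 // ltW.
have B : \sum_(i <oo) (poisson_pmf lam (i + J))%:E <= (lam ^+ J / J`!%:R)%:E.
  apply: (@le_trans _ _ (\sum_(i <oo) ((lam ^+ J / J`!%:R)%:E * (poisson_pmf lam i)%:E))).
    apply: lee_nneseries => [k _ _|k _]; first exact: f0.
    rewrite -EFinM lee_fin; exact: pmf_shift.
  by rewrite nneseriesZl // pois_series // mule1.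
have S : \sum_(0 <= k < J) (poisson_pmf lam k)%:E = (\sum_(j < J) poisson_pmf lam j)%:E.
  by rewrite sumEFin big_mkord.
rewrite S in T.
have : 1 <= (\sum_(j < J) poisson_pmf lam j)%:E + (lam ^+ J / J`!%:R)%:E.
  by rewrite -T leeD2l.
rewrite -EFinD lee_fin => h.
by rewrite lerBlDl.
Qed.
End F.
Section I.
Context (R : realType) (d : measure_display) (T : measurableType d)
  (P : probability T R) (lam : R) (hlam : 0 < lam) (Y : {RV P >-> R})
  (hY : poisson_distributed_RV P lam Y).

Definition SJ (J : nat) : set R := [set x | exists2 j : nat, (j < J)%N & x = j%:R].

Lemma SJ0 : SJ 0 = set0.
Proof. by apply/seteqP; split => x // [j]. Qed.

Lemma SJS J : SJ J.+1 = SJ J `|` [set J%:R].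
Proof.
apply/seteqP; split => x /=.
  move=> [j]; rewrite ltnS leq_eqVlt => /orP[/eqP -> ->|jJ ->]; first by right.
  by left; exists j.
move=> [[j jJ ->]|->]; first by exists j => //; apply: ltnW.
by exists J.
Qed.

Lemma mSJ J : measurable (SJ J).
Proof.
elim: J => [|J ih]; first by rewrite SJ0.
rewrite SJS; apply: measurableU => //; exact: measurable_set1.
Qed.

Lemma P_SJ J : P (Y @^-1` SJ J) = (\sum_(j < J) poisson_pmf lam j)%:E.
Proof.
elim: J => [|J ih]; first by rewrite SJ0 preimage_set0 measure0 big_ord0.
rewrite SJS preimage_setU measureU.
- by rewrite big_ord_recr /= EFinD -ih -hY.
- exact: measurable_funPTI (mSJ J).
- exact: measurable_funPTI (measurable_set1 _).
apply/seteqP; split => w // [/= [j jJ ->]] /(congr1 (fun x : R => x)).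
move/eqP; rewrite eqr_nat => /eqP ej.
by move: jJ; rewrite ej ltnn.
Qed.

Lemma P_notSJ J : fine (P (Y @^-1` (~` SJ J))) <= lam ^+ J / J`!%:R.
Proof.
rewrite -preimage_setC probability_setC; last exact: measurable_funPTI (mSJ J).
rewrite P_SJ -[X in fine X]/((1 - \sum_(j < J) poisson_pmf lam j)%:E) /=.
exact: pois_tail.
Qed.
End I.
Arguments SJ {R} J.
Arguments mSJ {R} J.

Section H.
Context (R : realType) (d : measure_display) (T : measurableType d)
  (P : probability T R).

Lemma ub_seq (I : eqType) (s : seq I) (Q : pred I) (F : I -> set T) (G : set T) :
  (forall i, measurable (F i)) -> measurable G ->
  (forall w, G w -> exists i, [/\ i \in s, Q i & F i w]) ->
  (P G <= \sum_(i <- s | Q i) P (F i))%E.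
Proof.
move=> mF; elim: s G => [|a s ih] G mG hG.
  have -> : G = set0.
    by apply/seteqP; split => w // /hG [i []].
  by rewrite measure0 big_nil.
rewrite big_cons.
case: ifPn => Qa.
  have sub : G `<=` F a `|` (G `\` F a).
    by move=> w Gw; case: (pselect (F a w)) => h; [left|right].
  apply: (le_trans (le_measure _ _ _ sub)); rewrite ?inE //.
  - by apply: measurableU => //; apply: measurableD.
  apply: (le_trans (measureU2 _ _ _)) => //; first by apply: measurableD.
  apply: leeD => //; apply: ih; first by apply: measurableD.
  move=> w [Gw nF]; have [i [/[!inE] /orP[/eqP ->|] Qi Fi]] := hG w Gw.
    by [].
  by move=> si; exists i; split.
apply: ih => // w Gw; have [i [/[!inE] /orP[/eqP ei|si] Qi Fi]] := hG w Gw.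
  by move: Qa; rewrite -ei Qi.
by exists i.
Qed.

Lemma ub_fin (I : finType) (Q : pred I) (F : I -> set T) (G : set T) :
  (forall i, measurable (F i)) -> measurable G ->
  (forall w, G w -> exists i, Q i /\ F i w) ->
  (P G <= \sum_(i | Q i) P (F i))%E.
Proof.
move=> mF mG hG; apply: ub_seq => // w /hG [i [Qi Fi]].
by exists i; split => //; rewrite mem_index_enum.
Qed.
End H.
Section J.
Variable R : realType.
Lemma a_ge0 (m n : nat) : (0 : R) <= (n%:R : R) `^ (m%:R^-1).
Proof. exact: powR_ge0. Qed.

Lemma a_ge1 (m n : nat) : (0 < m)%N -> (0 < n)%N -> (1 : R) <= (n%:R : R) `^ (m%:R^-1).
Proof.
move=> m0 n0; rewrite leNgt; apply/negP => h.
have := @exprn_ilt1 R m ((n%:R : R) `^ (m%:R^-1)) (a_ge0 m n) h.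
rewrite lt0n_neq0 // rootK //.
by rewrite ltNge ler1n n0.
Qed.

Lemma a_le_n (m n : nat) : (0 < m)%N -> (0 < n)%N -> (n%:R : R) `^ (m%:R^-1) <= n%:R.
Proof.
move=> m0 n0; set a := (n%:R : R) `^ (m%:R^-1).
have a1 : 1 <= a by exact: a_ge1.
rewrite -[X in _ <= X](rootK R m n m0) -/a.
have a0 : 0 <= a by apply: le_trans ler01 a1.
have : (0 < m)%N by [].
case: (m) => // k _.
by rewrite exprS ler_peMr // exprn_ege1.
Qed.

Lemma ln_n_le (m n : nat) : (0 < m)%N -> (0 < n)%N ->
  ln (n%:R : R) <= m%:R * (n%:R : R) `^ (m%:R^-1).
Proof.
move=> m0 n0.
have h := ln_root R m n.
have m0R : (0 : R) < m%:R by rewrite ltr0n.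
have : ln (n%:R : R) = m%:R * ln ((n%:R : R) `^ (m%:R^-1)).
  by rewrite h mulrC divfK // gt_eqF.
move=> ->; rewrite ler_pM2l //.
apply: ltW; apply: ln_sublinear.
exact: lt_le_trans ltr01 (@a_ge1 m n m0 n0).
Qed.
End J.
Lemma low_ineq (R : realType) (a k L Ls M x lk y : R) :
  1 <= a -> k <= a + 1 -> 0 <= k -> 0 <= L -> 0 <= Ls -> 0 <= lk -> lk <= x + y ->
  x <= a -> 0 <= M -> a * y = 1 -> 0 <= y -> y <= 1 ->
  k * L + M * k * lk + Ls <= a * (M * x) + (2 * L + 3 * M + Ls) * a.
Proof.
move=> a1 ka k0 L0 Ls0 lk0 lkx xa M0 ay y0 y1.
have h1 : M * k * lk <= M * (a + 1) * (x + y).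
  apply: ler_pM; rewrite ?mulr_ge0 //; first by apply: ler_wpM2l.
have h2 : M * (a + 1) * (x + y) = a * (M * x) + M * x + M + M * y.
  have : M * (a + 1) * (x + y) = M * x * a + M * x + M * (a * y) + M * y by ring.
  by rewrite ay => ->; ring.
have h3 : M * x <= M * a by apply: ler_wpM2l.
have h4 : M * y <= M by rewrite -{2}(mulr1 M); apply: ler_wpM2l.
have h5 : k * L <= 2 * L * a.
  apply: le_trans (_ : (a + 1) * L <= _); first by apply: ler_wpM2r.
  nra.
nra.
Qed.

Lemma pmf_lower (R : realType) (l : R) (k : nat) : 0 < l -> (0 < k)%N ->
  expR (- (k%:R * `|ln l|) - k%:R * ln (k%:R : R) - l) <= poisson_pmf l k.
Proof.
move=> l0 k0; rewrite /poisson_pmf l0.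
have kR : (0 : R) < k%:R by rewrite ltr0n.
rewrite !expRD; apply: ler_pM; rewrite ?expR_ge0 //.
  apply: ler_pM; rewrite ?expR_ge0 //.
    rewrite -[X in _ <= X ^+ _](lnK (x := l)) ?posrE // -expRM_natl ler_expR.
    rewrite -mulrN; apply: ler_wpM2l; first exact: ltW.
    by rewrite lerNl -normrN ler_norm.
  have f0 : (0 : R) < k`!%:R by rewrite ltr0n fact_gt0.
  rewrite expRN expRM_natl lnK ?posrE //.
  rewrite lef_pV2 ?posrE ?exprn_gt0 //.
  by rewrite -natrX ler_nat fact_le_pow.
Qed.
Section G.
Context (R : realType) (d : measure_display) (T : measurableType d)
  (P : probability T R) (m : nat) (lam : 'I_m -> R)
  (hlam : forall i, 0 < lam i) (X : 'I_m -> {RV P >-> R})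
  (hX : forall i, poisson_distributed_RV P (lam i) (X i))
  (hind : mutually_independent P X).

Lemma mX i (B : set R) : measurable B -> measurable (X i @^-1` B).
Proof. move=> mB; exact: measurable_funPTI. Qed.

Definition Ev (n : nat) := [set w | (n%:R : R) <= \prod_(i < m) X i w].

Lemma mEv n : measurable (Ev n).
Proof.
have mf : measurable_fun setT (fun w => \prod_(i < m) X i w).
  by apply: measurable_prod => i _; exact: measurable_funPT.
have := mf measurableT [set x : R | n%:R <= x].
rewrite setTI; apply.
have -> : [set y : R | n%:R <= y] = `[n%:R, +oo[%classic.
  by apply/seteqP; split => y /=; rewrite in_itv /= andbT.
exact: measurable_itv.
Qed.

Lemma P_point (k : 'I_m -> nat) :
  P (\bigcap_(i in [set: 'I_m]) X i @^-1` [set (k i)%:R]) =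
  (\prod_i poisson_pmf (lam i) (k i))%:E.
Proof.
rewrite hind; last by move=> i; exact: measurable_set1.
rewrite -prodEFin; apply: eq_bigr => i _; exact: hX.
Qed.

Lemma lower_bound (n k : nat) : (n <= k ^ m)%N ->
  ((\prod_i poisson_pmf (lam i) k)%:E <= P (Ev n))%E.
Proof.
move=> hk.
rewrite -(P_point (fun _ => k)).
apply: le_measure; rewrite ?inE.
- apply: fin_bigcap_measurable => // i _; apply: mX; exact: measurable_set1.
- exact: mEv.
move=> w /= hw; rewrite /Ev /=.
have -> : \prod_(i < m) X i w = \prod_(i < m) (k%:R : R).
  apply: eq_bigr => i _; exact: (hw i I).
by rewrite prodr_const card_ord -natrX ler_nat.
Qed.
Lemma Pfin (A : set T) : measurable A -> P A = (fine (P A))%:E.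
Proof.
move=> mA; rewrite fineK // ge0_fin_numE //.
exact: le_lt_trans (probability_le1 _ mA) (ltry _).
Qed.

Lemma upper_bound (n J : nat) :
  (P (Ev n) <= (\sum_i (lam i ^+ J / J`!%:R))%:E +
    (\sum_(t : {ffun 'I_m -> 'I_J} | (n <= \prod_i t i)%N)
        \prod_i poisson_pmf (lam i) (t i))%:E)%E.
Proof.
pose Q := fun x : ('I_m + {ffun 'I_m -> 'I_J})%type =>
  match x with inl _ => true | inr t => (n <= \prod_i t i)%N end.
pose F := fun x : ('I_m + {ffun 'I_m -> 'I_J})%type =>
  match x with inl i => X i @^-1` (~` SJ J)
  | inr t => \bigcap_(i in [set: 'I_m]) X i @^-1` [set ((t i : nat))%:R] end.
have mF : forall x, measurable (F x).
  case => [i|t] /=.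
    by apply: mX; apply: measurableC; exact: mSJ.
  apply: fin_bigcap_measurable => // i _; apply: mX.

have cover : forall w, Ev n w -> exists x, Q x /\ F x w.
  move=> w Ew.
  case: (pselect (exists i, ~ SJ J (X i w))) => [[i hi]|hno].
    by exists (inl i).
  have hall : forall i, exists j : 'I_J, X i w = (j : nat)%:R.
    move=> i; apply: contrapT => hn; apply: hno; exists i => hs; apply: hn.
    by case: hs => j jJ e; exists (Ordinal jJ).
  case: (@choice _ _ (fun i (j : 'I_J) => X i w = (j : nat)%:R) hall) => f hf.
  exists (inr [ffun i => f i]); split => /=.
    rewrite -(@ler_nat R) natr_prod.
    have <- : \prod_(i < m) X i w = \prod_(i < m) ([ffun i => f i] i : nat)%:R.
      by apply: eq_bigr => i _; rewrite ffunE hf.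
    exact: Ew.
  by move=> i _ /=; rewrite ffunE hf.
apply: le_trans (@ub_fin _ _ _ P _ Q F (Ev n) mF (mEv n) cover) _.
rewrite big_sumType /=; apply: leeD.
  rewrite -sumEFin; apply: lee_sum => i _.
  rewrite Pfin; last by apply: mX; apply: measurableC; exact: mSJ.
  rewrite lee_fin; exact: (@P_notSJ _ _ _ _ _ (hlam i) _ (hX i)).
rewrite -sumEFin; apply: lee_sum => t _.
by rewrite P_point.
Qed.
Definition Lc := \sum_i `|ln (lam i)|.
Definition Ls := \sum_i lam i.
Definition pn n := fine (P (Ev n)).

Lemma Lc_ge0 : 0 <= Lc.
Proof. by apply: sumr_ge0 => i _. Qed.
Lemma Ls_ge0 : 0 <= Ls.
Proof. by apply: sumr_ge0 => i _; apply: ltW. Qed.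

Lemma pn_ge n (x : R) : (x%:E <= P (Ev n))%E -> x <= pn n.
Proof. by rewrite /pn -lee_fin -(@Pfin (Ev n) (mEv n)). Qed.

Lemma pn_le n (x : R) : (P (Ev n) <= x%:E)%E -> pn n <= x.
Proof. by rewrite /pn -lee_fin -(@Pfin (Ev n) (mEv n)). Qed.

Lemma lower_ln (m0 : (0 < m)%N) n : (0 < n)%N ->
  0 < pn n /\
  - ((n%:R : R) `^ (m%:R^-1) * ln (n%:R : R)) - (2 * Lc + 3 * m%:R + Ls) * (n%:R : R) `^ (m%:R^-1)
    <= ln (pn n).
Proof.
move=> n0.
set a := (n%:R : R) `^ (m%:R^-1).
have a1 : 1 <= a by exact: a_ge1.
have a0 : 0 < a by exact: lt_le_trans ltr01 a1.
set k := (Num.truncn a).+1.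
have hk : a < k%:R by exact: truncnS_gt.
have hk2 : k%:R <= a + 1.
  by rewrite /k -addn1 natrD lerD2r truncn_le ltW.
have k0 : (0 < k)%N by [].
have kR : (0 : R) < k%:R by rewrite ltr0n.
have hnk : (n <= k ^ m)%N.
  rewrite -(ler_nat R) natrX -(rootK R m n m0) -/a.
  by apply: lerXn2r; rewrite ?nnegrE ?ltW.
have hp := @pn_ge n _ (@lower_bound n k hnk).
have he : expR (- (k%:R * Lc) - m%:R * (k%:R * ln (k%:R : R)) - Ls) <=
    \prod_i poisson_pmf (lam i) k.
  have -> : - (k%:R * Lc) - m%:R * (k%:R * ln (k%:R : R)) - Ls =
      \sum_i (- (k%:R * `|ln (lam i)|) - k%:R * ln (k%:R : R) - lam i).
    by rewrite !sumrB sumrN sumr_const card_ord [m%:R * _]mulr_natl /Ls /Lc mulr_sumr.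
  rewrite expR_sum; apply: ler_prod => i _; apply/andP; split.
    exact: expR_ge0.
  exact: pmf_lower.
have pp : 0 < pn n by apply: lt_le_trans (expR_gt0 _) (le_trans he hp).
split => //.
have hl : - (k%:R * Lc) - m%:R * (k%:R * ln (k%:R : R)) - Ls <= ln (pn n).
  rewrite -ler_expR lnK ?posrE //; exact: le_trans he hp.
apply: le_trans hl.
have lna : ln (n%:R : R) = m%:R * ln a.
  rewrite /a ln_root mulrC divfK // pnatr_eq0 -lt0n //.
have ay : a * a^-1 = 1 by rewrite mulfV // gt_eqF.
have lk : ln (k%:R : R) <= ln a + a^-1.
  have -> : ln a + a^-1 = ln (a * (1 + a^-1)) + (a^-1 - ln (1 + a^-1)).
    rewrite lnM ?posrE ?addr_gt0 ?invr_gt0 //; ring.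
  apply: le_trans (_ : ln (a * (1 + a^-1)) <= _).
    rewrite ler_ln ?posrE ?mulr_gt0 ?addr_gt0 ?invr_gt0 //.
    by rewrite mulrDr mulr1 ay.
  rewrite lerDl subr_ge0; apply: le_ln1Dx.
  by apply: lt_le_trans (_ : -1 < 0) _; rewrite ?invr_ge0 ?ltW // ltrN10.
have ai0 : 0 <= a^-1 by rewrite invr_ge0 ltW.
have ai1 : a^-1 <= 1 by rewrite invf_le1.
have lsa : ln a <= a by apply: ltW; exact: (@ln_sublinear R a a0).
have := @low_ineq R a k%:R Lc Ls m%:R (ln a) (ln (k%:R : R)) a^-1 a1 hk2 (ltW kR)
  Lc_ge0 Ls_ge0 (ln_ge0 (le_trans a1 (ltW hk))) lk lsa (ler0n _ _) ay ai0 ai1.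
rewrite lna => h.
have -> : - (a * (m%:R * ln a)) - (2 * Lc + 3 * m%:R + Ls) * a =
  - (a * (m%:R * ln a) + (2 * Lc + 3 * m%:R + Ls) * a) by ring.
have -> : - (k%:R * Lc) - m%:R * (k%:R * ln (k%:R : R)) - Ls =
  - (k%:R * Lc + m%:R * k%:R * ln (k%:R : R) + Ls) by ring.
by rewrite lerN2.
Qed.
Lemma hLc i : lam i <= expR Lc.
Proof.
rewrite -[X in X <= _](lnK (x := lam i)) ?posrE // ler_expR.
apply: le_trans (ler_norm _) _.
rewrite /Lc (bigD1 i) //= lerDl; by apply: sumr_ge0 => j _.
Qed.

Lemma upper_ln (m2 : (2 <= m)%N) n : (0 < n)%N -> m%:R * (1 + Lc) <= ln (n%:R : R) ->
  0 < pn n ->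
  ln (pn n) <= - ((n%:R : R) `^ (m%:R^-1) * ln (n%:R : R))
     + (2 * m%:R * (m%:R + 1) + m%:R * (1 + Lc)) * (n%:R : R) `^ (m%:R^-1).
Proof.
move=> n0 hbig pp.
have m0 : (0 < m)%N by apply: leq_trans m2.
set a := (n%:R : R) `^ (m%:R^-1).
have a1 : 1 <= a by exact: a_ge1.
have a0 : 0 < a by exact: lt_le_trans ltr01 a1.
set J := (m * n)%N.
have J0 : (0 < J)%N by rewrite muln_gt0 m0 n0.
have mR : (0 : R) < m%:R by rewrite ltr0n.
have JR : (0 : R) < J%:R by rewrite ltr0n.
set B := expR (m%:R * (1 + Lc) * a - a * ln (n%:R : R)).
have B0 : 0 <= B by exact: expR_ge0.
have h1 : forall i, lam i ^+ J / J`!%:R <= B.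
  move=> i; apply: le_trans (@pmf_term_bound R (lam i) Lc J (hlam i) (hLc i) J0) _.
  rewrite ler_expR.
  apply: (@final_ineq R J%:R (J%:R * ln (J%:R : R)) (m%:R * ln (J%:R : R))).
  - exact: mR.
  - exact: ltW.
  - by rewrite mulrCA.
  - have lJ : 0 <= ln (J%:R : R) by apply: ln_ge0; rewrite ler1n.
    apply: le_trans (_ : ln (J%:R : R) <= _).
      by rewrite ler_ln ?posrE ?ltr0n // ler_nat leq_pmull.
    by rewrite ler_peMl // ler1n.
  - rewrite /J natrM [m%:R * _]mulrC mulfK ?gt_eqF //; exact: a_le_n.
  - exact: hbig.
have h2 : forall t : {ffun 'I_m -> 'I_J}, (n <= \prod_i t i)%N ->
    \prod_i poisson_pmf (lam i) (t i) <= B.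
  move=> t ht.
  apply: le_trans (@tuple_bound R m lam Lc (fun i => (t i : nat)) n m0 hlam hLc n0 ht hbig).
  apply: ler_prod => i _; apply/andP; split; first exact: poisson_pmf_ge0.
  rewrite /poisson_pmf hlam -[X in _ <= X]mulr1; apply: ler_wpM2l.
    by rewrite divr_ge0 // exprn_ge0 // ltW.
  by rewrite expR_le1 oppr_le0 ltW.
have ub : pn n <= \sum_i (lam i ^+ J / J`!%:R) +
    \sum_(t : {ffun 'I_m -> 'I_J} | (n <= \prod_i t i)%N) \prod_i poisson_pmf (lam i) (t i).
  by apply: pn_le; rewrite EFinD; exact: upper_bound.
have S1 : \sum_i (lam i ^+ J / J`!%:R) <= m%:R * B.
  apply: le_trans (_ : \sum_(i < m) B <= _); first by apply: ler_sum => i _.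
  by rewrite sumr_const card_ord mulr_natl.
have S2 : \sum_(t : {ffun 'I_m -> 'I_J} | (n <= \prod_i t i)%N)
        \prod_i poisson_pmf (lam i) (t i) <= (J ^ m)%:R * B.
  rewrite big_mkcond /=.
  apply: le_trans (_ : \sum_(t : {ffun 'I_m -> 'I_J}) B <= _).
    apply: ler_sum => t _; case: ifPn => // ht; exact: h2.
  by rewrite sumr_const card_ffun !card_ord mulr_natl.
have hp : pn n <= (m + J ^ m)%:R * B.
  apply: le_trans ub _; rewrite natrD mulrDl; exact: lerD.
have cnt : ((m + J ^ m) <= J ^ m.+1)%N.
  have e1 : (m <= J)%N by rewrite /J leq_pmulr.
  have e2 : (J <= J ^ m)%N.
    by rewrite -{1}(expn1 J) leq_pexp2l.
  have e3 : (2 <= J)%N by apply: leq_trans e1.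
  rewrite expnS; nia.
have lnJ : ln (J%:R : R) <= 2 * m%:R * a.
  rewrite /J natrM lnM ?posrE ?ltr0n //.
  have := @ln_n_le R m n m0 n0; rewrite -/a => h.
  have : ln (m%:R : R) <= m%:R by apply: ltW; apply: ln_sublinear.
  have : m%:R <= m%:R * a by rewrite ler_peMr // ltW.
  move=> hh hm; nra.
have cnt2 : ln ((m + J ^ m)%:R : R) <= (m%:R + 1) * (2 * m%:R * a).
  apply: le_trans (_ : ln ((J ^ m.+1)%:R : R) <= _).
    rewrite ler_ln ?posrE ?ltr0n ?addn_gt0 ?m0 ?expn_gt0 ?J0 // ler_nat //.
  rewrite natrX lnXn //.
  apply: le_trans (_ : (2 * m%:R * a) *+ m.+1 <= _).
    by rewrite lerMn2r lnJ orbT.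
  by rewrite -mulr_natl -natr1.
have : ln (pn n) <= ln ((m + J ^ m)%:R * B).
  rewrite ler_ln ?posrE //; apply: lt_le_trans pp hp.
rewrite lnM ?posrE ?ltr0n ?addn_gt0 ?m0 ?expR_gt0 // /B expRK => h.
apply: le_trans h _.
have -> : - (a * ln (n%:R : R)) + (2 * m%:R * (m%:R + 1) + m%:R * (1 + Lc)) * a =
  (m%:R + 1) * (2 * m%:R * a) + (m%:R * (1 + Lc) * a - a * ln (n%:R : R)) by ring.
by rewrite lerD2r.
Qed.
Lemma main_result (hm : (2 <= m)%N) :
  (exists C : R, exists N : nat, forall n : nat, (N <= n)%N ->
     exists e : R, `|e| <= C * (n%:R `^ (m%:R^-1)) /\
       prod_tail P X n =
         ((2 * pi) `^ ((m%:R - 1) / 2)) * (n%:R `^ ((m%:R - 1) / (2 * m%:R)))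
         * expR (- (n%:R `^ (m%:R^-1)) * ln n%:R + e))
  /\
  (exists C : R, exists N : nat, forall n : nat, (N <= n)%N ->
     `|ln (prod_tail P X n) + (n%:R `^ (m%:R^-1)) * ln n%:R|
       <= C * (n%:R `^ (m%:R^-1))).
Proof.
have m0 : (0 < m)%N by apply: leq_trans hm.
have mR : (0 : R) < m%:R by rewrite ltr0n.
have E : forall n, prod_tail P X n = pn n by [].
set C1 := 2 * m%:R * (m%:R + 1) + m%:R * (1 + Lc).
set C2 := 2 * Lc + 3 * m%:R + Ls.
have C10 : 0 <= C1 by rewrite /C1 addr_ge0 ?mulr_ge0 ?addr_ge0 ?Lc_ge0.
have C20 : 0 <= C2 by rewrite /C2 !addr_ge0 ?mulr_ge0 ?Lc_ge0 ?Ls_ge0.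
set N := (Num.truncn (expR (m%:R * (1 + Lc)))).+1.
have key : forall n, (N <= n)%N ->
    [/\ (0 < n)%N, 0 < pn n &
     `|ln (pn n) + (n%:R : R) `^ (m%:R^-1) * ln (n%:R : R)| <= (C1 + C2) * (n%:R : R) `^ (m%:R^-1)].
  move=> n hn.
  have n0 : (0 < n)%N by apply: leq_trans hn.
  have hbig : m%:R * (1 + Lc) <= ln (n%:R : R).
    rewrite -[X in X <= _]expRK ler_ln ?posrE ?expR_gt0 ?ltr0n //.
    apply: ltW; apply: lt_le_trans (truncnS_gt _) _.
    by rewrite ler_nat.
  have [pp lo] := @lower_ln m0 n n0.
  have up := @upper_ln hm n n0 hbig pp.
  split => //.
  set a := (n%:R : R) `^ (m%:R^-1).
  have a0 : 0 <= a by exact: powR_ge0.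
  rewrite ler_norml; apply/andP; split.
    rewrite mulrDl opprD; move: lo; rewrite -/a -/C2 => lo.
    have : - (C1 * a) <= 0 by rewrite oppr_le0 mulr_ge0.
    move=> h; lra.
  rewrite mulrDl; move: up; rewrite -/a -/C1 => up.
  have : 0 <= C2 * a by rewrite mulr_ge0.
  move=> h; lra.
split; last first.
  exists (C1 + C2), N => n hn; rewrite E.
  by have [_ _ h] := key n hn.
set pi2 := (2 * pi : R).
have pi20 : 0 < pi2 by rewrite /pi2 mulr_gt0 // pi_gt0.
exists (C1 + C2 + m%:R * `|ln pi2| + m%:R), N => n hn.
have [n0 pp h] := key n hn.
set a := (n%:R : R) `^ (m%:R^-1).
have a1 : 1 <= a by exact: a_ge1.
have nR : (0 : R) < n%:R by rewrite ltr0n.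
set u := (m%:R - 1) / 2 : R.
set v := (m%:R - 1) / (2 * m%:R) : R.
set pref := pi2 `^ u * (n%:R : R) `^ v.
have pref0 : 0 < pref by rewrite /pref mulr_gt0 // powR_gt0.
have lnpref : ln pref = u * ln pi2 + v * ln (n%:R : R).
  by rewrite /pref lnM ?posrE ?powR_gt0 // !ln_powR.
have m1 : (1 : R) <= m%:R by rewrite ler1n.
have u0 : 0 <= u by rewrite /u divr_ge0 // subr_ge0.
have um : u <= m%:R by rewrite /u ler_pdivrMr //; lra.
have v0 : 0 <= v by rewrite /v divr_ge0 ?mulr_ge0 // ?subr_ge0 // ltW.
have v1 : v <= 1.
  by rewrite /v ler_pdivrMr ?mulr_gt0 // mul1r; lra.
have lnn0 : 0 <= ln (n%:R : R) by rewrite ln_ge0 // ler1n.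
have lnn : ln (n%:R : R) <= m%:R * a by exact: ln_n_le.
have bpref : `|ln pref| <= (m%:R * `|ln pi2| + m%:R) * a.
  rewrite lnpref; apply: le_trans (ler_normD _ _) _.
  rewrite (normrM u) (normrM v) (ger0_norm u0) (ger0_norm v0) (ger0_norm lnn0) mulrDl.
  apply: lerD.
    apply: le_trans (_ : m%:R * `|ln pi2| <= _).
      by apply: ler_wpM2r.
    by rewrite ler_peMr // mulr_ge0.
  apply: le_trans (_ : ln (n%:R : R) <= _) => //.
  by rewrite ler_piMl.
exists (ln (pn n) - ln pref + a * ln (n%:R : R)); split.
  have -> : ln (pn n) - ln pref + a * ln (n%:R : R) =
    (ln (pn n) + a * ln (n%:R : R)) + (- ln pref) by ring.
  apply: le_trans (ler_normD _ _) _; rewrite normrN.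
  have -> : (C1 + C2 + m%:R * `|ln pi2| + m%:R) * a =
    (C1 + C2) * a + (m%:R * `|ln pi2| + m%:R) * a by ring.
  exact: lerD.
rewrite E.
have -> : - a * ln (n%:R : R) + (ln (pn n) - ln pref + a * ln (n%:R : R)) =
  ln (pn n) - ln pref by ring.
rewrite expRB !lnK ?posrE // mulrC divfK // gt_eqF //.
Qed.
End G.

Theorem theorem4 (R : realType) (d : measure_display) (T : measurableType d)
  (P : probability T R) (m : nat) (hm : (2 <= m)%N) (lam : 'I_m -> R)
  (hlam : forall i, 0 < lam i) (X : 'I_m -> {RV P >-> R})
  (hX : forall i, poisson_distributed_RV P (lam i) (X i))
  (hind : mutually_independent P X) :
  (exists C : R, exists N : nat, forall n : nat, (N <= n)%N ->
     exists e : R, `|e| <= C * (n%:R `^ (m%:R^-1)) /\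
       prod_tail P X n =
         ((2 * pi) `^ ((m%:R - 1) / 2)) * (n%:R `^ ((m%:R - 1) / (2 * m%:R)))
         * expR (- (n%:R `^ (m%:R^-1)) * ln n%:R + e))
  /\
  (exists C : R, exists N : nat, forall n : nat, (N <= n)%N ->
     `|ln (prod_tail P X n) + (n%:R `^ (m%:R^-1)) * ln n%:R|
       <= C * (n%:R `^ (m%:R^-1))).
Proof.
exact: (@main_result R d T P m lam hlam X hX hind hm).
Qed.
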